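(* Let $n\ge2$, $A\in\mathbb{R}^{n\times m}$, $B\in\mathbb{R}^{m\times n}$. If the DSR graph $G_{A,B}$ is steady, then the DSR$^{[2]}$ graph $G^{[2]}_{A,B}$ is steady. In particular, if $G_{A,B}$ is acyclic, then $G^{[2]}_{A,B}$ is steady.
   Context: DSR graphs: for $P\in\mathbb{R}^{n\times m}$, $Q\in\mathbb{R}^{m\times n}$, $G_{P,Q}$ is the signed, labelled bipartite digraph with S-vertices $S_1,\dots,S_n$ and R-vertices $R_1,\dots,R_m$, with an arc $R_j\to S_i$ of sign $\mathrm{sign}(P_{ij})$ iff $P_{ij}\ne0$ and an arc $S_i\to R_j$ of sign $\mathrm{sign}(Q_{ji})$ iff $Q_{ji}\ne0$; antiparallel arcs of equal sign are merged into a single undirected edge. An edge arising from $P_{ij}\ne0$ (R-to-S or undirected) has label $|P_{ij}|$; an edge with only S-to-R orientation has label $\infty$. Walks traverse edges consistently with orientation; a cycle is a nonempty closed walk repeating no vertex except first$=$last (a 2-cycle requires two distinct edges between the same vertices). A cycle $(e_1,\dots,e_{2r})$ is an s-cycle if all its labels are finite and $\prod_{i=1}^r l(e_{2i-1})=\prod_{i=1}^r l(e_{2i})$. A DSR graph is steady if all its cycles are s-cycles, and acyclic if it has no cycles. DSR$^{[2]}$ graph: let $\overline{\mathbf L}^A\in\mathbb{R}^{\binom n2\times mn}$ (rows $(i,j)$, $i<j$; columns $(k,l)$, $1\le k\le m$, $1\le l\le n$) have entries $A_{jk}$ if $l=i$, $-A_{ik}$ if $l=j$, $0$ otherwise, and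 $\underline{\mathbf L}^B\in\mathbb{R}^{mn\times\binom n2}$ have $(k,l),(i,j)$ entry $B_{kj}$ if $l=i$, $-B_{ki}$ if $l=j$, $0$ otherwise. Then $G^{[2]}_{A,B}:=G_{\overline{\mathbf L}^A,\underline{\mathbf L}^B}$. *)

(* Defs.v *)
From HB Require Import structures.
From mathcomp Require Import all_boot all_order all_algebra.
Set Implicit Arguments. Unset Strict Implicit. Unset Printing Implicit Defensive.
Import Order.TTheory GRing.Theory Num.Theory.
Local Open Scope ring_scope.

(* DSR graphs G_{P,Q}, over arbitrary finite index types:
   S-vertices indexed by IS, R-vertices indexed by IR,
   P : IS -> IR -> R  (the matrix P, entry P_{ij}, i S-index, j R-index),
   Q : IR -> IS -> R  (the matrix Q, entry Q_{ji}). *)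
Section DSR.
Variables (R : realFieldType) (IS IR : finType).
Variables (P : IS -> IR -> R) (Q : IR -> IS -> R).

(* vertices: inl i = S_i, inr j = R_j *)
Definition dsr_vertex := (IS + IR)%type.

(* edges between S_i and R_j:
   (i, j, true)  = the edge arising from P_{ij} <> 0 (R_j -> S_i, and
                   undirected i.e. also S_i -> R_j when it was merged with
                   the antiparallel arc S_i -> R_j of equal sign);
   (i, j, false) = an arc S_i -> R_j arising from Q_{ji} <> 0 that was
                   NOT merged (i.e. with only S-to-R orientation). *)
Definition dsr_edge := (IS * IR * bool)%type.

Definition merged (i : IS) (j : IR) : bool :=
  (P i j != 0) && (Q j i != 0) && (Num.sg (P i j) == Num.sg (Q j i)).

Definition dsr_trav (e : dsr_edge) (u v : dsr_vertex) : bool :=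
  let: (i, j, b) := e in
  if b then
    ((u == inr j) && (v == inl i) && (P i j != 0))
    || ((u == inl i) && (v == inr j) && merged i j)
  else
    (u == inl i) && (v == inr j) && (Q j i != 0) && ~~ merged i j.

(* labels: finite labels |P_{ij}| for P-edges, infinity (None) otherwise *)
Definition dsr_label (e : dsr_edge) : option R :=
  let: (i, j, b) := e in if b then Some `|P i j| else None.

Definition lab_val (e : dsr_edge) : R :=
  if dsr_label e is Some x then x else 0.

(* A cycle of length L: edges es 0, ..., es (L-1) (= e_1,...,e_L) through
   vertices vs 0, ..., vs L with vs L = vs 0, each edge traversed
   consistently with its orientation, no repeated vertex, and (for the
   2-cycle case) distinct edges. *)
Definition is_cycle (L : nat) (vs : nat -> dsr_vertex) (es : nat -> dsr_edge)
  : Prop :=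
  [/\ (0 < L)%N,
      vs L = vs 0%N,
      (forall t, (t < L)%N -> dsr_trav (es t) (vs t) (vs t.+1)),
      (forall t1 t2, (t1 < L)%N -> (t2 < L)%N -> vs t1 = vs t2 -> t1 = t2) &
      (forall t1 t2, (t1 < L)%N -> (t2 < L)%N -> es t1 = es t2 -> t1 = t2)].

(* s-cycle: all labels finite and prod of labels of e_1,e_3,... equals
   prod of labels of e_2,e_4,... (e_{t+1} = es t). *)
Definition is_s_cycle (L : nat) (es : nat -> dsr_edge) : Prop :=
  (forall t, (t < L)%N -> dsr_label (es t) != None) /\
  \prod_(t < L | ~~ odd t) lab_val (es t) = \prod_(t < L | odd t) lab_val (es t).

Definition steady : Prop :=
  forall L vs es, is_cycle L vs es -> is_s_cycle L es.

Definition acyclic : Prop :=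
  forall L vs es, ~ is_cycle L vs es.

End DSR.

(* Index set of the rows of the second additive compound: pairs (i,j), i<j *)
Definition pairs (n : nat) := {p : 'I_n * 'I_n | (p.1 < p.2)%N}.

Definition Lbar (R : ringType) (n m : nat) (A : 'M[R]_(n, m))
  (p : pairs n) (c : 'I_m * 'I_n) : R :=
  let: (i, j) := val p in let: (k, l) := c in
  if l == i then A j k else if l == j then - A i k else 0.

Definition Lund (R : ringType) (n m : nat) (B : 'M[R]_(m, n))
  (c : 'I_m * 'I_n) (p : pairs n) : R :=
  let: (i, j) := val p in let: (k, l) := c in
  if l == i then B k j else if l == j then - B k i else 0.

(* Main.v *)
Require Import Defs.
From mathcomp Require Import all_boot all_order all_algebra.
From mathcomp Require Import zify.
Import Order.TTheory GRing.Theory Num.Theory.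
Set Implicit Arguments. Unset Strict Implicit. Unset Printing Implicit Defensive.
Local Open Scope ring_scope.

Section Gen.
Variables (R : realFieldType) (IS IR : finType).
Variables (P : IS -> IR -> R) (Q : IR -> IS -> R).

Local Notation V := (dsr_vertex IS IR).
Local Notation E := (dsr_edge IS IR).
Local Notation trav := (dsr_trav P Q).
Local Notation lab := (lab_val P).
Local Notation label := (dsr_label P).

Definition isS (x : V) : bool := if x is inl _ then true else false.

Lemma travP (i : IS) (j : IR) (b : bool) u v : trav (i, j, b) u v ->
  [\/ [/\ u = inr j, v = inl i, b & P i j != 0],
      [/\ u = inl i, v = inr j, b & merged P Q i j] |
      [/\ u = inl i, v = inr j, ~~ b & (Q j i != 0) && ~~ merged P Q i j]].
Proof.
rewrite /dsr_trav; case: b.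
  case/orP => /andP[/andP[/eqP -> /eqP ->] H]; [by constructor 1|by constructor 2].
by case/andP => /andP[/andP[/eqP -> /eqP ->] H1] H; constructor 3; rewrite // H1.
Qed.

Lemma trav_side e u v : trav e u v -> isS u = ~~ isS v.
Proof. by case: e => [[i j] b] /travP [] [-> ->]. Qed.

Lemma trav_lab e u v : trav e u v -> label e != None -> True.
Proof. by []. Qed.

Lemma trav_edge e u v u' v' : trav e u v -> trav e u' v' ->
  (u = u' /\ v = v') \/ (u = v' /\ v = u').
Proof.
case: e => [[i j] b] /travP [] [-> -> Hb H] /travP [] [-> -> Hb' H'].
all: try by left.
all: try by right.
all: by rewrite Hb in Hb'.
Qed.

Lemma alt L (vs : nat -> V) (es : nat -> E) :
  (forall t, (t < L)%N -> trav (es t) (vs t) (vs t.+1)) ->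
  forall t, (t <= L)%N -> isS (vs t) = isS (vs 0%N) (+) odd t.
Proof.
move=> Ht; elim=> [|t IH] Hle; first by rewrite addbF.
have := trav_side (Ht t Hle); rewrite IH ?(ltnW Hle) //= => H.
by rewrite addbN H negbK.
Qed.

Lemma s_cycleE L (vs : nat -> V) (es : nat -> E) :
  (forall t, (t < L)%N -> trav (es t) (vs t) (vs t.+1)) ->
  is_s_cycle P L es <->
  ((forall t, (t < L)%N -> label (es t) != None) /\
   \prod_(t < L | isS (vs t)) lab (es t) = \prod_(t < L | ~~ isS (vs t)) lab (es t)).
Proof.
move=> Ht.
have H (t : 'I_L) : isS (vs t) = isS (vs 0%N) (+) odd t by rewrite (alt Ht (ltnW (ltn_ord t))).
rewrite /is_s_cycle; case E0: (isS (vs 0%N)).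
- have H1 (t : 'I_L) : ~~ odd t = isS (vs t) by rewrite H E0.
  have H2 (t : 'I_L) : odd t = ~~ isS (vs t) by rewrite H E0 /= negbK.
  by rewrite (eq_bigl _ _ H1) (eq_bigl _ _ H2).
- have H1 (t : 'I_L) : ~~ odd t = ~~ isS (vs t) by rewrite H E0.
  have H2 (t : 'I_L) : odd t = isS (vs t) by rewrite H E0.
  rewrite (eq_bigl _ _ H1) (eq_bigl _ _ H2).
  by split; case=> a b; split.
Qed.


Definition Tr := (V * E * V)%type.

Fixpoint walk (a b : V) (s : seq Tr) : bool :=
  match s with
  | [::] => a == b
  | x :: s' => (x.1.1 == a) && trav x.1.2 x.1.1 x.2 && walk x.2 b s'
  end.

Definition wend (a : V) (s : seq Tr) := last a [seq x.2 | x <- s].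

Lemma walk_cat1 a c b s1 s2 : walk a c s1 -> walk c b s2 -> walk a b (s1 ++ s2).
Proof.
elim: s1 a => [|x s1 IH] a /=; first by move/eqP ->.
by case/andP => -> H1 H2; rewrite IH.
Qed.

Lemma walk_split a b s1 s2 : walk a b (s1 ++ s2) ->
  walk a (wend a s1) s1 /\ walk (wend a s1) b s2.
Proof.
elim: s1 a => [|x s1 IH] a /=; first by rewrite /wend /= eqxx.
case/andP => H1 /IH [H2 H3]; by rewrite H1.
Qed.

Lemma walk_head c b x s : walk c b (x :: s) -> c = x.1.1.
Proof. by case/andP => /andP[/eqP]. Qed.

Lemma walk_nth_next a b s x0 : walk a b s ->
  forall t, (t < size s)%N -> (nth x0 s t).2 = nth b [seq x.1.1 | x <- s] t.+1.
Proof.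
elim: s a => [|x s IH] a //= /andP[_ Hw] [|t] Ht /=.
  by case: s Hw {IH Ht} => [/eqP ->|y s /walk_head ->].
by rewrite (IH _ Hw).
Qed.

Lemma walk_trav a b s x0 : walk a b s ->
  forall t, (t < size s)%N -> trav (nth x0 s t).1.2 (nth x0 s t).1.1 (nth x0 s t).2.
Proof.
elim: s a => [|x s IH] a //= /andP[/andP[_ Ht] Hw] [|t] Hlt //=.
exact: IH Hw _ _.
Qed.

Lemma walk_take a b s x0 i : walk a b s -> (i < size s)%N ->
  wend a (take i s) = (nth x0 s i).1.1.
Proof.
move=> Hw Hi; move: Hw; rewrite -{1}(cat_take_drop i s) => /walk_split [_].
by rewrite (drop_nth x0 Hi) => /walk_head.
Qed.

Definition num (s : seq Tr) := \prod_(x <- s | isS x.1.1) lab x.1.2.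
Definition den (s : seq Tr) := \prod_(x <- s | ~~ isS x.1.1) lab x.1.2.
Definition fin (s : seq Tr) := all (fun x : Tr => label x.1.2 != None) s.
Definition good s := fin s /\ num s = den s.

Lemma good_cat s1 s2 : good s1 -> good s2 -> good (s1 ++ s2).
Proof.
case=> F1 N1 [F2 N2]; split; first by rewrite /fin all_cat; apply/andP.
by rewrite /num /den !big_cat /= -/(num s1) -/(num s2) N1 N2.
Qed.

Lemma good_perm s1 s2 : perm_eq s1 s2 -> good s1 -> good s2.
Proof.
move=> Hp [F N]; split; first by rewrite /fin -(perm_all _ Hp).
by rewrite /num /den -(perm_big _ Hp) -(perm_big _ Hp).
Qed.

Lemma seq2 (T : Type) (y : T) (l : seq T) : size l = 2%N -> l = [:: nth y l 0; nth y l 1].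
Proof. by case: l => [|a [|b [|c l]]]. Qed.

Lemma good2 e u v : trav e u v -> trav e v u -> good [:: (u, e, v); (v, e, u)].
Proof.
case: e => [[i j] b] /travP [] [-> -> Hb H] /travP [] [Hv Hu Hb' H'] //.
all: try discriminate.
all: try by rewrite Hb in Hb'.
all: try by rewrite Hb' in Hb.
all: split; first by rewrite /fin /= Hb.
all: by rewrite /num /den !big_cons !big_nil /= mulr1.
Qed.

Lemma CW_uniq : steady P Q -> forall x0 s a, walk a a (x0 :: s) ->
  uniq [seq x.1.1 | x <- x0 :: s] -> good (x0 :: s).
Proof.
move=> st x0 s a Hw Hu; set S := x0 :: s in Hw Hu *.
set L := size S.
pose vs t := nth a [seq x.1.1 | x <- S] t.
pose es t := (nth x0 S t).1.2.
have F1 t : (t < L)%N -> (nth x0 S t).1.1 = vs t by move=> Ht; rewrite /vs (nth_map x0).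
have F2 t : (t < L)%N -> (nth x0 S t).2 = vs t.+1 by move=> Ht; rewrite (walk_nth_next _ Hw).
have F3 t : (t < L)%N -> trav (es t) (vs t) (vs t.+1).
  by move=> Ht; rewrite -F1 // -F2 //; exact: walk_trav Hw _ _.
have VL : vs L = vs 0%N.
  rewrite /vs nth_default ?size_map //=.
  by rewrite (walk_head Hw).
have F4 t1 t2 : (t1 < L)%N -> (t2 < L)%N -> vs t1 = vs t2 -> t1 = t2.
  move=> H1 H2 /eqP; rewrite /vs nth_uniq ?size_map //; by move/eqP.
have L0 : (0 < L)%N by [].
have conv : (forall t, (t < L)%N -> label (es t) != None) ->
   \prod_(t < L | isS (vs t)) lab (es t) = \prod_(t < L | ~~ isS (vs t)) lab (es t) ->
   good S.
  move=> Hf Hp; split.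
    by apply/(all_nthP x0) => t Ht; apply: Hf.
  rewrite /num /den !(big_nth x0) !big_mkord.
  rewrite (eq_bigl (fun t : 'I_L => isS (vs t))); last by move=> t; rewrite F1.
  rewrite [in RHS](eq_bigl (fun t : 'I_L => ~~ isS (vs t))); last by move=> t; rewrite F1.
  exact: Hp.
have Ees t : (t < L)%N -> es t = nth x0.1.2 [seq x.1.2 | x <- S] t.
  by move=> Ht; rewrite (nth_map x0).
case: (boolP (uniq [seq x.1.2 | x <- S])) => He.
- have F5 t1 t2 : (t1 < L)%N -> (t2 < L)%N -> es t1 = es t2 -> t1 = t2.
    move=> H1 H2; rewrite !Ees // => /eqP.
    by rewrite nth_uniq ?size_map // => /eqP.
  have Hc : is_cycle P Q L vs es by split.
  have := st _ _ _ Hc; rewrite (s_cycleE F3) => -[Hf Hp].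
  exact: conv.
- case/(uniqPn x0.1.2): He => t1 [t2 [H12 H2]]; rewrite size_map in H2.
  have H1 : (t1 < L)%N by apply: ltn_trans H2.
  rewrite -!Ees // => Heq.
  have T2 := F3 _ H2; rewrite -Heq in T2.
  have := trav_edge (F3 _ H1) T2.
  case=> [[/F4 E1 _]|[E1 E2]]; first by move: H12; rewrite E1 ?ltnn.
  have t21 : t2 = t1.+1.
    by symmetry; apply: F4 E2; rewrite // (leq_ltn_trans H12 H2).
  have t2L : t2.+1 = L.
    case: (ltnP t2.+1 L) => Hlt; last by apply/eqP; rewrite eqn_leq Hlt H2.
    have := F4 _ _ H1 Hlt E1; lia.
  have t10 : t1 = 0%N.
    by apply: F4; rewrite // E1 t2L VL.
  subst t1 t2.
  have ES t : (t < L)%N -> nth x0 S t = (vs t, es t, vs t.+1).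
    by move=> Ht; rewrite -F1 // -F2 // /es; case: (nth x0 S t) => [[? ?] ?].
  have -> : S = [:: nth x0 S 0; nth x0 S 1].
    by apply: seq2.
  have V2 : vs 2%N = vs 0%N by rewrite t2L VL.
  have T0 := F3 0%N L0; have T1 := F3 1%N H2.
  rewrite (ES 0%N L0) (ES 1%N H2) V2 Heq; rewrite Heq in T0; rewrite V2 in T1.
  exact: good2.
Qed.


Lemma CW : steady P Q -> forall s a, walk a a s -> good s.
Proof.
move=> st s; elim: {s}(size s) {-2}s (leqnn (size s)) => [|N IH] s Hs a Hw.
  move: Hs; rewrite leqn0 => /nilP ->.
  by split; rewrite /num /den ?big_nil.
case: s Hs Hw => [|x0 s] Hs Hw.
  by split; rewrite /num /den ?big_nil.
case: (boolP (uniq [seq x.1.1 | x <- x0 :: s])) => Hu; first exact: CW_uniq Hw Hu.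
set S := x0 :: s in Hs Hw Hu *.
case/(uniqPn a): Hu => i [j [Hij Hj]]; rewrite size_map in Hj.
have Hi : (i < size S)%N by apply: ltn_trans Hj.
rewrite !(nth_map x0) // => Hw_eq.
set w := (nth x0 S i).1.1 in Hw_eq.
set s1 := take i S; set s2 := take (j - i) (drop i S); set s3 := drop j S.
have ES : S = s1 ++ s2 ++ s3.
  have -> : s3 = drop (j - i) (drop i S) by rewrite drop_drop subnK // ltnW.
  by rewrite /s2 cat_take_drop /s1 cat_take_drop.
have W1 := Hw; rewrite {1}ES in W1; case/walk_split: W1 => W1 W23.
have Ew1 : wend a s1 = w by rewrite /s1 (walk_take x0 Hw Hi).
rewrite Ew1 in W1 W23.
have Hdi : (j - i < size (drop i S))%N.
  by rewrite size_drop ltn_sub2r.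
have W23' : walk w a (drop i S) by rewrite -(cat_take_drop (j - i) (drop i S)) drop_drop subnK ?(ltnW Hij).
case/walk_split: W23 => W2 W3.
have Ew2 : wend w s2 = w.
  by rewrite /s2 (walk_take x0 W23' Hdi) nth_drop subnKC ?(ltnW Hij) // Hw_eq.
rewrite Ew2 in W2 W3.
have Hs2 : (size s2 <= N)%N.
  rewrite /s2 size_take size_drop ltn_sub2r //; move: Hs Hj Hij; move: (size S) => k.
  clear; lia.
have Hs13 : (size (s1 ++ s3) <= N)%N.
  rewrite size_cat /s1 /s3 size_take size_drop Hi; move: Hs Hj Hij Hi; move: (size S) => k.
  clear; lia.
have G2 := IH _ Hs2 _ W2.
have G13 := IH _ Hs13 _ (walk_cat1 W1 W3).
apply: good_perm (good_cat G13 G2).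
by rewrite ES -catA perm_cat2l perm_catC.
Qed.

End Gen.



Section Main.
Variables (R : realFieldType) (n m : nat) (A : 'M[R]_(n, m)) (B : 'M[R]_(m, n)).
Local Notation PA := (fun (i : 'I_n) (j : 'I_m) => A i j).
Local Notation QB := (fun (j : 'I_m) (i : 'I_n) => B j i).
Local Notation V2 := (dsr_vertex (pairs n) ('I_m * 'I_n)%type).
Local Notation E2 := (dsr_edge (pairs n) ('I_m * 'I_n)%type).
Local Notation V := (dsr_vertex 'I_n 'I_m).
Local Notation trav2 := (dsr_trav (Lbar A) (Lund B)).
Local Notation trav := (dsr_trav PA QB).

Definition other (p : pairs n) (l : 'I_n) : 'I_n :=
  if l == (val p).1 then (val p).2 else (val p).1.
Definition inp (p : pairs n) (l : 'I_n) : bool := (l == (val p).1) || (l == (val p).2).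
Definition mE (e : E2) : dsr_edge 'I_n 'I_m :=
  let: (p, kl, b) := e in (other p kl.2, kl.1, b).
Definition mV (e : E2) (X : V2) : V :=
  match X with inl _ => inl (mE e).1.1 | inr _ => inr (mE e).1.2 end.
Definition pos (X : V2) : (V * V)%type :=
  match X with inl p => (inl (val p).1, inl (val p).2) | inr kl => (inl kl.2, inr kl.1) end.

Lemma Lbar_E p k l : Lbar A p (k, l) =
  if l == (val p).1 then A (val p).2 k else if l == (val p).2 then - A (val p).1 k else 0.
Proof. by case: p => [[i j] h]. Qed.

Lemma Lund_E p k l : Lund B (k, l) p =
  if l == (val p).1 then B k (val p).2 else if l == (val p).2 then - B k (val p).1 else 0.
Proof. by case: p => [[i j] h]. Qed.

Lemma notin0 p k l : ~~ inp p l -> Lbar A p (k, l) = 0 /\ Lund B (k, l) p = 0.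
Proof. by rewrite /inp negb_or Lbar_E Lund_E => /andP[/negbTE -> /negbTE ->]. Qed.

Lemma keyE p k l : inp p l ->
  [/\ (Lbar A p (k, l) != 0) = (A (other p l) k != 0),
      (Lund B (k, l) p != 0) = (B k (other p l) != 0),
      merged (Lbar A) (Lund B) p (k, l) = merged PA QB (other p l) k &
      `|Lbar A p (k, l)| = `|A (other p l) k| ].
Proof.
rewrite /merged Lbar_E Lund_E /other /inp; case: ifP => H1 /= H2; first by [].
by rewrite H2 !oppr_eq0 !sgrN eqr_opp normrN.
Qed.

Lemma other_neq p l : inp p l -> other p l != l.
Proof.
case: p => [[i j] /= h]; rewrite /inp /other /=.
have hij : i != j by rewrite neq_ltn h.
have hji : (j == i) = false by rewrite eq_sym (negbTE hij).
by case/orP => /eqP ->; rewrite ?eqxx ?hji // eq_sym.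
Qed.

Lemma trav2_inp p k l b X Y : trav2 (p, (k, l), b) X Y -> inp p l.
Proof.
case: (boolP (inp p l)) => // /(notin0 k) [H1 H2] /travP [] [_ _ _].
- by rewrite H1 eqxx.
- by rewrite /merged H1 eqxx.
- by rewrite H2 eqxx.
Qed.

Lemma M1 e X Y : trav2 e X Y -> trav (mE e) (mV e X) (mV e Y).
Proof.
case: e => [[p [k l]] b] Ht; have Hin := trav2_inp Ht.
have [E1 E2 E3 E4] := keyE k Hin.
move: Ht => /travP [] [-> -> Hb H]; move: Hb H; case: b => //= _.
- by rewrite -E1 => ->; rewrite !eqxx.
- by rewrite E3 => H; rewrite !eqxx H.
- by rewrite E2 E3 !eqxx.
Qed.

Lemma M_lab e X Y : trav2 e X Y -> lab_val (Lbar A) e = lab_val PA (mE e).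
Proof.
case: e => [[p [k l]] b] Ht; have Hin := trav2_inp Ht.
have [E1 E2 E3 E4] := keyE k Hin.
by case: b {Ht} => //=.
Qed.

Lemma M_label e X Y : trav2 e X Y -> dsr_label (Lbar A) e = dsr_label PA (mE e).
Proof.
case: e => [[p [k l]] b] Ht; have Hin := trav2_inp Ht.
have [E1 E2 E3 E4] := keyE k Hin.
by case: b {Ht} => //=; rewrite E4.
Qed.

Lemma M2 e X Y : trav2 e X Y -> exists c,
  [/\ pos X = (mV e X, c) \/ pos X = (c, mV e X),
      pos Y = (mV e Y, c) \/ pos Y = (c, mV e Y) & mV e X != c].
Proof.
case: e => [[p [k l]] b] Ht; have Hin := trav2_inp Ht.
have Hp : pos (inl p) = (inl (other p l), inl l) \/ pos (inl p) = (inl l, inl (other p l)).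
  move: Hin; rewrite /inp /other /=; case: ifP => [/eqP -> _|_ /= /eqP ->]; by [right|left].
have Hn := other_neq Hin.
exists (inl l); move: Ht => /travP [] [-> -> _ _] /=; split; by [right | ].
Qed.

Lemma step_aux (u v c : V) (s pX pY : (V * V)%type) : u != c ->
  (pX = (u, c) \/ pX = (c, u)) -> (pY = (v, c) \/ pY = (c, v)) ->
  (s = pX \/ s = (pX.2, pX.1)) ->
  ((if s.1 == u then (v, s.2) else (s.1, v)) = pY \/
   (if s.1 == u then (v, s.2) else (s.1, v)) = (pY.2, pY.1)) /\
  (if s.1 == u then True else s.2 = u).
Proof.
move=> Hne; have Hcu : (c == u) = false by rewrite eq_sym (negbTE Hne).
by case=> -> [] -> [] -> /=; rewrite ?eqxx ?Hcu; auto.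
Qed.

Section Cyc.
Variables (L : nat) (vs : nat -> V2) (es : nat -> E2).
Hypothesis Ht : forall t, (t < L)%N -> trav2 (es t) (vs t) (vs t.+1).

Definition mu t : Tr 'I_n 'I_m := (mV (es t) (vs t), mE (es t), mV (es t) (vs t.+1)).

Fixpoint st (t : nat) : (V * V)%type :=
  match t with
  | 0 => pos (vs 0)
  | t'.+1 => let s := st t' in
      if s.1 == (mu t').1.1 then ((mu t').2, s.2) else (s.1, (mu t').2)
  end.

Definition mv t := (st t).1 == (mu t).1.1.
Definition W1 T := [seq mu t | t <- iota 0 T & mv t].
Definition W2 T := [seq mu t | t <- iota 0 T & ~~ mv t].

Lemma stS T : st T.+1 = if mv T then ((mu T).2, (st T).2) else ((st T).1, (mu T).2).
Proof. by []. Qed.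

Lemma stI T : (T <= L)%N ->
  (st T = pos (vs T) \/ st T = ((pos (vs T)).2, (pos (vs T)).1)) /\
  (T < L -> if mv T then True else (st T).2 = (mu T).1.1)%N.
Proof.
elim: T => [|T IH] HT.
  split; first by left.
  move=> HL; have [c [Hx Hy Hne]] := M2 (Ht HL).
  have [_ H2] := step_aux (v := (mu 0).2) (s := st 0) Hne Hx Hy (or_introl erefl).
  by rewrite /mv; exact: H2.
have [IH1 _] := IH (ltnW HT).
have [c [Hx Hy Hne]] := M2 (Ht HT).
have [H1 _] := step_aux (v := (mu T).2) (s := st T) Hne Hx Hy IH1.
have Hs1 : st T.+1 = pos (vs T.+1) \/ st T.+1 = ((pos (vs T.+1)).2, (pos (vs T.+1)).1).
  by rewrite stS /mv; exact: H1.
split => // HL; have [c' [Hx' Hy' Hne']] := M2 (Ht HL).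
have [_ H2] := step_aux (v := (mu T.+1).2) Hne' Hx' Hy' Hs1.
by rewrite /mv; exact: H2.
Qed.

Lemma walkI T : (T <= L)%N ->
  walk PA QB (st 0).1 (st T).1 (W1 T) /\ walk PA QB (st 0).2 (st T).2 (W2 T).
Proof.
elim: T => [|T IH] HT; first by rewrite /W1 /W2 /= !eqxx.
have [IH1 IH2] := IH (ltnW HT).
have [_ Hm] := stI (ltnW HT).
have Hm' := Hm HT.
have Htr : trav (mu T).1.2 (mu T).1.1 (mu T).2 by exact: M1 (Ht HT).
rewrite stS /W1 /W2 -addn1 iotaD !filter_cat !map_cat add0n /= -/(W1 T) -/(W2 T).
case: (boolP (mv T)) => Hmv /=; rewrite ?cats0.
- split; last exact: IH2.
  apply: walk_cat1 IH1 _ => /=.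
  apply/andP; split; [apply/andP; split|]; [rewrite eq_sym; exact: Hmv | exact: Htr | exact: eqxx].
- split; first exact: IH1.
  apply: walk_cat1 IH2 _ => /=.
  rewrite (negbTE Hmv) in Hm'.
  apply/andP; split; [apply/andP; split|]; [rewrite Hm'; exact: eqxx | exact: Htr | exact: eqxx].
Qed.

Lemma cyc_good : steady PA QB -> vs L = vs 0 -> good PA [seq mu t | t <- iota 0 L].
Proof.
move=> Hst VL.
have [[HL|HL] _] := stI (leqnn L); have [Wa Wb] := walkI (leqnn L); rewrite HL VL in Wa Wb.
- have G := good_cat (CW Hst Wa) (CW Hst Wb).
  apply: good_perm G.
  by rewrite /W1 /W2 -map_cat perm_map // perm_filterC.
- have G := CW Hst (walk_cat1 Wa Wb).
  apply: good_perm G.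
  by rewrite /W1 /W2 -map_cat perm_map // perm_filterC.
Qed.

End Cyc.

Lemma steady2 : steady PA QB -> steady (Lbar A) (Lund B).
Proof.
move=> Hst L vs es [L0 VL Ht Hv He].
apply/(s_cycleE Ht).
have [F N] := cyc_good Ht Hst VL.
have EP t : isS (mu vs es t).1.1 = isS (vs t) by rewrite /mu; case: (vs t).
split.
- move=> t Hlt; rewrite (M_label (Ht t Hlt)).
  move/allP: F => /(_ (mu vs es t)); rewrite map_f ?mem_iota //=.
  by move=> /(_ isT).
- have C1 : \prod_(t < L | isS (vs t)) lab_val (Lbar A) (es t) = num PA [seq mu vs es t | t <- iota 0 L].
    rewrite /num big_map.
    have -> : iota 0 L = index_iota 0 L by rewrite /index_iota subn0.
    rewrite big_mkord; apply: eq_big => t; first by rewrite EP.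
    move=> _; exact: M_lab (Ht t (ltn_ord t)).
  have C2 : \prod_(t < L | ~~ isS (vs t)) lab_val (Lbar A) (es t) = den PA [seq mu vs es t | t <- iota 0 L].
    rewrite /den big_map.
    have -> : iota 0 L = index_iota 0 L by rewrite /index_iota subn0.
    rewrite big_mkord; apply: eq_big => t; first by rewrite EP.
    move=> _; exact: M_lab (Ht t (ltn_ord t)).
  by rewrite C1 C2.
Qed.

End Main.

Theorem corollary5p1 (R : realFieldType) (n m : nat)
  (A : 'M[R]_(n, m)) (B : 'M[R]_(m, n)) :
  (2 <= n)%N ->
  (steady (fun (i : 'I_n) (j : 'I_m) => A i j) (fun (j : 'I_m) (i : 'I_n) => B j i) ->
     steady (Lbar A) (Lund B)) /\
  (acyclic (fun (i : 'I_n) (j : 'I_m) => A i j) (fun (j : 'I_m) (i : 'I_n) => B j i) ->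
     steady (Lbar A) (Lund B)).
Proof.
move=> _; split; first exact: steady2.
move=> Hac; apply: steady2 => L vs es Hc.
by case: (Hac L vs es Hc).
Qed.
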